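(* Define binary words by $a_0=0$, $b_0=1$, $a_{n+1}=a_nb_n$, $b_{n+1}=b_na_n$ (so $|a_n|=2^n$). For every integer $u>0$ and every $n$ with $u\le |a_n|/4$, among the positions $i\in\{1,\ldots,2^n-u\}$ there are at least $2^n/4$ positions where the $i$-th and $(i+u)$-th bits of $a_n$ coincide and at least $2^n/4$ positions where they differ. *)

(* Defs.v *)
From mathcomp Require Import all_boot.
Set Implicit Arguments. Unset Strict Implicit. Unset Printing Implicit Defensive.

(* Thue–Morse-type words: (a_n, b_n) with a_0 = 0, b_0 = 1,
   a_{n+1} = a_n b_n, b_{n+1} = b_n a_n. Bits encoded as bool (0 = false). *)
Fixpoint ab (n : nat) : seq bool * seq bool :=
  match n with
  | 0 => ([:: false], [:: true])
  | n'.+1 => let: (a, b) := ab n' in (a ++ b, b ++ a)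
  end.

Definition a_word (n : nat) : seq bool := (ab n).1.
Definition b_word (n : nat) : seq bool := (ab n).2.

(* The i-th bit (1-indexed, as in the paper) of a word w. *)
Definition bit (w : seq bool) (i : nat) : bool := nth false w i.-1.

(* Main.v *)
Require Import Defs.
From mathcomp Require Import all_boot.

Lemma a_wordS n : a_word n.+1 = a_word n ++ b_word n.
Proof. by rewrite /a_word /b_word /=; case: (ab n). Qed.
Lemma b_wordS n : b_word n.+1 = b_word n ++ a_word n.
Proof. by rewrite /a_word /b_word /=; case: (ab n). Qed.
Lemma b_wordE n : b_word n = map negb (a_word n).
Proof.
elim: n => [//|n IH]; rewrite a_wordS b_wordS map_cat IH -map_comp.
by rewrite (@eq_map _ _ (negb \o negb) id) ?map_id // => x /=; rewrite negbK.
Qed.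
Lemma size_a n : size (a_word n) = 2 ^ n.
Proof.
elim: n => [//|n IH]; by rewrite a_wordS size_cat b_wordE size_map IH expnS mul2n addnn.
Qed.

Lemma nth_a_mono n m k : n <= m -> k < 2 ^ n ->
  nth false (a_word m) k = nth false (a_word n) k.
Proof.
move=> le; elim: m le => [|m IH]; first by rewrite leqn0 => /eqP ->.
rewrite leq_eqVlt => /orP [/eqP -> //| lt] hk.
rewrite a_wordS nth_cat size_a (leq_trans hk (leq_pexp2l _ _)) //.
by rewrite IH.
Qed.

Definition tm k := nth false (a_word k.+1) k.

Lemma ltn_2exp k : k < 2 ^ k.
Proof. by elim: k => // k IH; rewrite expnS mul2n -addnn -addn1 leq_add // expn_gt0. Qed.

Lemma nth_a n k : k < 2 ^ n -> nth false (a_word n) k = tm k.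
Proof.
move=> hk; rewrite /tm -(@nth_a_mono n (maxn n k.+1)) ?leq_maxl //.
rewrite (@nth_a_mono k.+1 (maxn n k.+1)) ?leq_maxr //.
by apply: (ltn_trans (ltn_2exp k)); rewrite ltn_exp2l.
Qed.

Lemma tm_high n m : m < 2 ^ n -> tm (2 ^ n + m) = ~~ tm m.
Proof.
move=> hm; rewrite -(@nth_a n.+1); last by rewrite expnS mul2n -addnn ltn_add2l.
by rewrite a_wordS nth_cat size_a ltnNge leq_addr /= addKn b_wordE (nth_map false) ?size_a // nth_a.
Qed.

Lemma tm_double k0 : tm k0.*2 = tm k0 /\ tm k0.*2.+1 = ~~ tm k0.
Proof.
suff H : forall n k, k < 2 ^ n -> tm k.*2 = tm k /\ tm k.*2.+1 = ~~ tm k.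
  exact: (H k0 k0 (ltn_2exp k0)).
elim=> [|n IH] k hk.
  by move: hk; rewrite expn0 ltnS leqn0 => /eqP ->.
case: (ltnP k (2 ^ n)) => [/IH //|ge].
have hm : k - 2 ^ n < 2 ^ n by rewrite ltn_subLR // addnn -mul2n -expnS.
have [h1 h2] := IH _ hm.
have ek : k = 2 ^ n + (k - 2 ^ n) by rewrite subnKC.
have e2 : k.*2 = 2 ^ n.+1 + (k - 2 ^ n).*2 by rewrite {1}ek doubleD expnS mul2n.
have hm2 : (k - 2 ^ n).*2.+1 < 2 ^ n.+1 by rewrite expnS mul2n ltn_Sdouble.
have tk : tm k = ~~ tm (k - 2 ^ n) by rewrite {1}ek tm_high.
rewrite e2 -addnS (tm_high _ _ hm2) (tm_high _ _ (ltn_trans (ltnSn _) hm2)) h1 h2 tk negbK.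
by split.
Qed.



Definition C n u b := \sum_(j < 2 ^ n - u) (tm j (+) tm (j + u) == b).

Lemma sum_split K (f : nat -> nat) :
  \sum_(j < K.*2) f j = \sum_(j < K) (f j.*2 + f j.*2.+1).
Proof.
elim: K => [|K IH]; first by rewrite !big_ord0.
by rewrite doubleS !big_ord_recr /= IH addnA.
Qed.

Lemma C_even n v b : v <= 2 ^ n -> C n.+1 v.*2 b = 2 * C n v b.
Proof.
move=> hv; rewrite /C expnS mul2n -doubleB (sum_split _ (fun j => tm j (+) tm (j + v.*2) == b)) [X in _ = X]mul2n -[X in _ = X]addnn -big_split /=.
apply: eq_bigr => j _.
have [e1 e2] := tm_double j; have [e3 e4] := tm_double (j + v).
by rewrite -doubleD e1 e3 addSn -doubleD e2 e4 addbN addNb negbK.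
Qed.

Lemma C_odd n v b : v < 2 ^ n ->
  C n.+1 v.*2.+1 b = C n v (~~ b) + C n v.+1 (~~ b).
Proof.
move=> hv.
have e : 2 ^ n.+1 - v.*2.+1 = (2 ^ n - v.+1).*2.+1.
  rewrite expnS mul2n -(subnKC hv) addKn doubleD !doubleS.
  by rewrite addSn subSn ?leq_addr // addKn.
have e' : 2 ^ n - v = (2 ^ n - v.+1).+1 by rewrite subnSK.
rewrite /C e e' big_ord_recr /= (sum_split _ (fun j => tm j (+) tm (j + v.*2.+1) == b)) big_ord_recr /= [in RHS]addnAC -big_split /=.
congr (_ + _); last first.
  have [e1 _] := tm_double (2 ^ n - v.+1); have [_ e2] := tm_double (2 ^ n - v.+1 + v).
  rewrite addnS -doubleD e1 e2.
  by case: (tm _); case: (tm _); case: b.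
apply: eq_bigr => j _.
have [e1 e2] := tm_double j; have [e3 e4] := tm_double (j + v); have [e5 e6] := tm_double (j + v.+1).
rewrite addnS -doubleD addSn addnS -doubleD -doubleS -addnS e1 e2 e4 e5.
by case: (tm _); case: (tm _); case: (tm _); case: b.
Qed.

From Stdlib Require Import Lia.

Lemma ar1 v w : 4 * (v.*2.+1) <= 2 * (4 * w) -> 4 * v.+1 <= 4 * w.
Proof.
rewrite -muln2 => /leP h; apply/leP; move: h.
rewrite -?multE -?plusE; lia.
Qed.

Lemma C0 n b : C n 0 b = if b then 0 else 2 ^ n.
Proof.
rewrite /C subn0; under eq_bigr do rewrite addn0 addbb.
case: b => /=; first by rewrite big1.
by rewrite sum1_card card_ord.
Qed.

Lemma C1t m : 2 ^ m <= C m.+1 1 true.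
Proof.
have := C_odd m 0 true (expn_gt0 2 m); rewrite /= => ->.
by rewrite C0 leq_addr.
Qed.

Lemma C1f k : 2 ^ k <= C k.+2 1 false.
Proof.
have := C_odd k.+1 0 false (expn_gt0 2 _); rewrite /= => ->.
by rewrite C0 add0n C1t.
Qed.

Lemma mainC n : forall u b, 0 < u -> 4 * u <= 2 ^ n -> 2 ^ n <= 4 * C n u b.
Proof.
elim/ltn_ind: n => n IH u b u0 hu.
case: n IH hu => [|m] IH hu.
  by move: hu u0; rewrite expn0 => /leP; rewrite -multE => h /ltP; lia.
have hv := odd_double_half u.
case hodd: (odd u); rewrite hodd /= in hv.
- case: (posnP u./2) => v0.
  + have u1 : u = 1 by rewrite -hv v0.
    subst u.
    case: m IH hu => [|k] IH hu; first by move: hu; rewrite muln1 expn1.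
    case: b.
    * have := C1t k.+1; rewrite expnS => h.
      apply: leq_trans (leq_mul (leqnn 4) h).
      by rewrite (expnS 2 k.+1) (expnS 2 k) leq_pmul2r ?muln_gt0 ?expn_gt0.
    * have := C1f k => h.
      by rewrite (expnS 2 k.+1) (expnS 2 k) mulnA leq_mul2l h orbT.
  + move: (u./2) hv v0 hu u0 => v <- v0 hu u0.
    have hw : 4 * v.+1 <= 2 ^ m.
      case: m IH hu => [|[|k]] IH hu.
      * by move: hu; rewrite expn1 -muln2 => /leP; rewrite -!multE -plusE => h; lia.
      * by move: hu v0; rewrite (expnS 2 1) expn1 -muln2 => /leP; rewrite -!multE -plusE => h /ltP; lia.
      * move: hu; rewrite add1n (expnS 2 k.+2) (expnS 2 k.+1) (expnS 2 k) -muln2.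
        move: (2 ^ k) => w /leP h; apply/leP; move: h; rewrite -!multE; lia.
    have hvl : v < 2 ^ m.
      by apply: leq_trans _ hw; apply: leq_pmull.
    rewrite (_ : _ + v.*2 = v.*2.+1) // C_odd // expnS.
    have h1 := IH m (ltnSn m) v (~~ b) v0 (leq_trans (leq_mul (leqnn 4) (leqnSn v)) hw).
    have h2 := IH m (ltnSn m) v.+1 (~~ b) (ltn0Sn v) hw.
    by rewrite mul2n -addnn mulnDr leq_add.
- move: (u./2) hv u0 hu => v <- u0 hu.
  rewrite (_ : _ + v.*2 = v.*2) // in u0 hu *.
  have v0 : 0 < v by rewrite -double_gt0.
  have hw : 4 * v <= 2 ^ m.
    move: hu; rewrite expnS -muln2; move: (2 ^ m) => w /leP h; apply/leP; move: h; rewrite -!multE; lia.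
  have hvl : v <= 2 ^ m by apply: leq_trans _ hw; apply: leq_pmull.
  have h := IH m (ltnSn m) v b v0 hw.
  by rewrite C_even // expnS mulnCA leq_mul2l h orbT.
Qed.


Lemma card_shift N u (Q : nat -> bool) : u <= N ->
  #|[set i : 'I_N.+1 | (1 <= i <= N - u) && Q i]| = \sum_(j < N - u) Q j.+1.
Proof.
move=> hu.
rewrite cardsE -sum1_card big_mkcond big_ord_recl /=.
rewrite (big_ord_widen N (fun j => nat_of_bool (Q j.+1))) ?leq_subr //.
rewrite add0n [RHS]big_mkcond; apply: eq_bigr => i _; rewrite unfold_in /=.
rewrite /bump leq0n add1n.
by case: (i < N - u); case: (Q _).
Qed.

Theorem mainTheorem4 (u n : nat) :
  0 < u -> u <= size (a_word n) %/ 4 ->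
  2 ^ n <= 4 * #|[set i : 'I_(2 ^ n).+1 | (1 <= i <= 2 ^ n - u) &&
                    (bit (a_word n) i == bit (a_word n) (i + u))]| /\
  2 ^ n <= 4 * #|[set i : 'I_(2 ^ n).+1 | (1 <= i <= 2 ^ n - u) &&
                    (bit (a_word n) i != bit (a_word n) (i + u))]|.
Proof.
move=> u0; rewrite size_a leq_divRL // mulnC => hu.
have hun : u <= 2 ^ n by apply: leq_trans hu; apply: leq_pmull.
rewrite (card_shift _ _ (fun i => bit (a_word n) i == bit (a_word n) (i + u))) // (card_shift _ _ (fun i => bit (a_word n) i != bit (a_word n) (i + u))) //.
have E : forall b, \sum_(j < 2 ^ n - u) ((tm j (+) tm (j + u)) == b) =
    \sum_(j < 2 ^ n - u) ((bit (a_word n) j.+1 == bit (a_word n) (j.+1 + u)) == ~~ b).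
  move=> b; apply: eq_bigr => j _.
  have hj := ltn_ord j.
  have hju : j + u < 2 ^ n by rewrite addnC -ltn_subRL.
  rewrite /bit addSn /= !nth_a // ?(leq_ltn_trans (leq_addr u j)) //.
  by case: (tm j); case: (tm (j + u)); case: b.
split.
- have := mainC n u false u0 hu; rewrite /C E.
  by under [X in _ <= 4 * X -> _]eq_bigr do rewrite eqb_id.
- have := mainC n u true u0 hu; rewrite /C E.
  by under [X in _ <= 4 * X -> _]eq_bigr do rewrite eqbF_neg.
Qed.
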